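(* Let $\mathfrak g=\bigoplus_{i=1}^{r}\mathfrak g_i$ be a Lie algebra decomposed as a direct sum of ideals, and let $k\ge1$. For each $i$, let $\mathcal{L}\mathrm{Der}_k(\mathfrak g_i,\mathfrak g_i)$ be the set of linear maps $f:\mathfrak g\to\mathfrak g$ with $f(\mathfrak g_l)=0$ for $l\ne i$, $f(\mathfrak g_i)\subseteq\mathfrak g_i$ and $f|_{\mathfrak g_i}\in\mathcal{L}\mathrm{Der}_k(\mathfrak g_i)$. For $i\ne j$, let $\mathcal{L}\mathrm{Der}_k(\mathfrak g_i,\mathfrak g_j)$ be the set of linear maps $f:\mathfrak g\to\mathfrak g$ such that $f(\mathfrak g_l)=0$ for all $l\ne i$, $f(\mathfrak g)\subseteq\mathfrak g_j$, $f([y_1,\dots,y_{k+1}])=0$ for all $y_1,\dots,y_{k+1}\in\mathfrak g_i$, and for every position $s\in\{1,\dots,k+1\}$ one has $[z_1,\dots,z_{s-1},f(y),z_{s+1},\dots,z_{k+1}]=0$ for all $y\in\mathfrak g_i$ and all $z_t\in\mathfrak g_j$. Then $$\mathcal{L}\mathrm{Der}_k(\mathfrak g)=\sum_{i,j}\mathcal{L}\mathrm{Der}_k(\mathfrak g_i,\mathfrak g_j).$$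
   Context: All Lie algebras are finite-dimensional over an algebraically closed field $\mathbb F$ of characteristic zero. For a Lie algebra $\mathfrak g$, an integer $k\ge1$ and $x_1,\dots,x_{k+1}\in\mathfrak g$, write $[x_1,\dots,x_{k+1}]$ for the right-nested bracket $[x_1,[x_2,[\dots,[x_k,x_{k+1}]\dots]]]$. A Leibniz-derivation of order $k$ of $\mathfrak g$ is a linear map $P:\mathfrak g\to\mathfrak g$ such that $P([x_1,\dots,x_{k+1}])=\sum_{i=1}^{k+1}[x_1,\dots,x_{i-1},P(x_i),x_{i+1},\dots,x_{k+1}]$ for all $x_1,\dots,x_{k+1}\in\mathfrak g$; the set of these is denoted $\mathcal{L}\mathrm{Der}_k(\mathfrak g)$. *)

(* Defs.v *)
From HB Require Import structures.
From mathcomp Require Import all_boot all_order all_algebra.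
Set Implicit Arguments. Unset Strict Implicit. Unset Printing Implicit Defensive.
Import GRing.Theory.
Local Open Scope ring_scope.

Section LieDefs.
Variables (F : fieldType) (V : vectType F).

Definition lie_bracket (br : V -> V -> V) : Prop :=
  [/\ forall (a : F) (x y z : V), br (a *: x + y) z = a *: br x z + br y z,
      forall (a : F) (x y z : V), br z (a *: x + y) = a *: br z x + br z y,
      forall x : V, br x x = 0 &
      forall x y z : V, br x (br y z) + br y (br z x) + br z (br x y) = 0].

Fixpoint nested (br : V -> V -> V) (s : seq V) : V :=
  match s with
  | [::] => 0
  | [:: x] => x
  | x :: s' => br x (nested br s')
  end.

Definition nbr (br : V -> V -> V) (k : nat) (x : 'I_k.+1 -> V) : V :=
  nested br [seq x t | t <- enum 'I_k.+1].

Definition upd (k : nat) (x : 'I_k.+1 -> V) (s : 'I_k.+1) (v : V) : 'I_k.+1 -> V :=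
  fun t => if t == s then v else x t.

Definition LDer_on (br : V -> V -> V) (k : nat) (U : {vspace V}) (P : 'End(V)) : Prop :=
  forall x : 'I_k.+1 -> V, (forall t, x t \in U) ->
    P (nbr br x) = \sum_(s < k.+1) nbr br (upd x s (P (x s))).

Definition LDer (br : V -> V -> V) (k : nat) (P : 'End(V)) : Prop :=
  LDer_on br k fullv P.

Definition LDer_ij (br : V -> V -> V) (k r : nat) (g : 'I_r -> {vspace V})
    (i j : 'I_r) (f : 'End(V)) : Prop :=
  if i == j then
    [/\ forall l, l != i -> forall y, y \in g l -> f y = 0,
        forall y, y \in g i -> f y \in g i &
        LDer_on br k (g i) f]
  else
    [/\ forall l, l != i -> forall y, y \in g l -> f y = 0,
        forall v, f v \in g j,
        forall y : 'I_k.+1 -> V, (forall t, y t \in g i) -> f (nbr br y) = 0 &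
        forall (s : 'I_k.+1) (y : V) (z : 'I_k.+1 -> V),
          y \in g i -> (forall t, z t \in g j) ->
          nbr br (upd z s (f y)) = 0].

End LieDefs.

(* Main.v *)
Require Import Defs.
From HB Require Import structures.
From mathcomp Require Import all_boot all_order all_algebra.
From Stdlib Require Import Classical FunctionalExtensionality.
Set Implicit Arguments. Unset Strict Implicit. Unset Printing Implicit Defensive.
Import GRing.Theory.
Local Open Scope ring_scope.

Section Br.
Variables (F : fieldType) (V : vectType F) (br : V -> V -> V) (Hlie : lie_bracket br).

Lemma br0l z : br 0 z = 0.
Proof.
case: Hlie => H1 _ _ _; have := H1 1 0 0 z; rewrite !scale1r addr0 => h.
by apply: (addrI (br 0 z)); rewrite addr0 -h.
Qed.
Lemma br0r z : br z 0 = 0.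
Proof.
case: Hlie => _ H1 _ _; have := H1 1 0 0 z; rewrite !scale1r addr0 => h.
by apply: (addrI (br z 0)); rewrite addr0 -h.
Qed.
Lemma brDl x y z : br (x + y) z = br x z + br y z.
Proof. by case: Hlie => H1 _ _ _; have := H1 1 x y z; rewrite !scale1r. Qed.
Lemma brDr x y z : br z (x + y) = br z x + br z y.
Proof. by case: Hlie => _ H1 _ _; have := H1 1 x y z; rewrite !scale1r. Qed.
Lemma brZl a x z : br (a *: x) z = a *: br x z.
Proof. by case: Hlie => H1 _ _ _; have := H1 a x 0 z; rewrite !addr0 br0l addr0. Qed.
Lemma brZr a x z : br z (a *: x) = a *: br z x.
Proof. by case: Hlie => _ H1 _ _; have := H1 a x 0 z; rewrite !addr0 br0r addr0. Qed.
Lemma br_anti x y : br x y = - br y x.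
Proof.
case: Hlie => _ _ H3 _; have := H3 (x + y).
rewrite brDl !brDr !H3 add0r addr0 => /eqP; rewrite addr_eq0 => /eqP //.
Qed.

Lemma nested_cons x s : s != [::] -> nested br (x :: s) = br x (nested br s).
Proof. by case: s. Qed.

Lemma nested_lin s1 s2 a u v :
  nested br (s1 ++ (a *: u + v) :: s2) =
  a *: nested br (s1 ++ u :: s2) + nested br (s1 ++ v :: s2).
Proof.
elim: s1 => [|y s1 IH].
  by case: s2 => [|w s2] //=; rewrite brDl brZl.
have ne : forall w, s1 ++ w :: s2 != [::] by case: s1 {IH}.
by rewrite !cat_cons !nested_cons // IH brDr brZr.
Qed.

Lemma nested_mem (U : {vspace V}) s :
  (forall x y, x \in U \/ y \in U -> br x y \in U) ->
  has (fun v => v \in U) s -> nested br s \in U.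
Proof.
move=> HU; elim: s => [|x s IH] //= /orP[Hx|Hs].
  by case: s {IH} => [|w s] //; apply: HU; left.
case: s IH Hs => [|w s] // IH Hs; apply: HU; right; exact: IH.
Qed.

Lemma nbr_upd k (x : 'I_k.+1 -> V) m :
  exists A B, forall w, nbr br (upd x m w) = nested br (A ++ w :: B).
Proof.
rewrite /nbr; have := enum_uniq 'I_k.+1; have := mem_enum 'I_k.+1 m.
move: (enum 'I_k.+1) => e Hm; case/splitPr: Hm => p1 p2.
rewrite cat_uniq /= => /and3P[_ /norP[Hm1 _] /andP[Hm2 _]].
exists (map x p1), (map x p2) => w; rewrite map_cat /= /upd eqxx; congr (nested br (_ ++ _ :: _)).

  apply/eq_in_map => t Ht; case: eqP => // Et; by rewrite -Et Ht in Hm1.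
apply/eq_in_map => t Ht; case: eqP => // Et; by rewrite -Et Ht in Hm2.
Qed.

Lemma nbr_lin k (x : 'I_k.+1 -> V) m a u v :
  nbr br (upd x m (a *: u + v)) = a *: nbr br (upd x m u) + nbr br (upd x m v).
Proof. by have [A [B H]] := nbr_upd x m; rewrite !H nested_lin. Qed.

Lemma nbrD k (x : 'I_k.+1 -> V) m u v :
  nbr br (upd x m (u + v)) = nbr br (upd x m u) + nbr br (upd x m v).
Proof. by have := nbr_lin x m 1 u v; rewrite !scale1r. Qed.

Lemma nbr_upd0 k (x : 'I_k.+1 -> V) m : nbr br (upd x m 0) = 0.
Proof.
have := nbrD x m 0 0; rewrite addr0 => h.
by apply: (addrI (nbr br (upd x m 0))); rewrite addr0 -h.
Qed.

Lemma nbr_mem (U : {vspace V}) k (x : 'I_k.+1 -> V) t :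
  (forall x y, x \in U \/ y \in U -> br x y \in U) ->
  x t \in U -> nbr br x \in U.
Proof.
move=> HU Ht; apply: nested_mem => //; apply/hasP; exists (x t) => //.
by apply: map_f; rewrite mem_enum.
Qed.

Lemma upd_same k (x : 'I_k.+1 -> V) s a b : upd (upd x s a) s b = upd x s b.
Proof. by apply: functional_extensionality => t; rewrite /upd; case: eqP. Qed.
Lemma upd_comm k (x : 'I_k.+1 -> V) s t a b : t != s ->
  upd (upd x s a) t b = upd (upd x t b) s a.
Proof.
move=> Hts; apply: functional_extensionality => u; rewrite /upd.
case: (u =P t) => [Ht|Ht]; case: (u =P s) => [Hs|Hs] //.
by move: Hts; rewrite -Ht -Hs eqxx.
Qed.
Lemma upd_id k (x : 'I_k.+1 -> V) s : upd x s (x s) = x.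
Proof. by apply: functional_extensionality => t; rewrite /upd; case: eqP => [->|]. Qed.
Lemma upd_eq k (x : 'I_k.+1 -> V) s a : upd x s a s = a.
Proof. by rewrite /upd eqxx. Qed.
Lemma upd_neq k (x : 'I_k.+1 -> V) s t a : t != s -> upd x s a t = x t.
Proof. by rewrite /upd => /negbTE ->. Qed.

Lemma additive_sum (Phi : V -> V) (I : finType) (u : I -> V) :
  (forall a b, Phi (a + b) = Phi a + Phi b) -> Phi 0 = 0 ->
  Phi (\sum_i u i) = \sum_i Phi (u i).
Proof.
move=> HD H0; apply: (big_ind2 (fun a b => Phi a = b)) => //.
by move=> a1 a2 b1 b2 <- <-.
Qed.

End Br.

Section Dec.
Variables (F : fieldType) (V : vectType F) (br : V -> V -> V) (Hlie : lie_bracket br).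
Variables (r : nat) (g : 'I_r -> {vspace V})
    (Hideal : forall (i : 'I_r) (x y : V), y \in g i -> br x y \in g i)
    (Hdirect : directv (\sum_(i < r) g i)%VS)
    (Hfull : (\sum_(i < r) g i)%VS = fullv).

Lemma idealg i x y : x \in g i \/ y \in g i -> br x y \in g i.
Proof.
case=> H; last exact: Hideal.
by rewrite (br_anti Hlie) memvN; apply: Hideal.
Qed.

Definition pi i : 'End(V) := sumv_pi_for (esym Hfull) i.

Lemma pi_mem i v : pi i v \in g i.
Proof. exact: memv_sum_pi. Qed.

Lemma pi_sum v : \sum_i pi i v = v.
Proof. exact: (sumv_pi_sum (esym Hfull) (memvf v)). Qed.

Lemma pi_uniq u v : (forall i, u i \in g i) -> \sum_i u i = v -> forall i, pi i v = u i.
Proof.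
move=> Hu Hv i.
have := Hdirect; move/directv_sum_unique => /(_ (fun i => pi i v) u) H; apply/eqP.
have : \sum_(i < r) pi i v == \sum_(i < r) u i by rewrite pi_sum Hv.
rewrite H => [/forallP/(_ i) //| j _ | j _]; [exact: pi_mem | exact: Hu].
Qed.

Lemma pi_id i v : v \in g i -> pi i v = v.
Proof.
move=> Hv; rewrite (@pi_uniq (fun j => if j == i then v else 0) v _ _ i) ?eqxx //.
  by move=> j; case: eqP => [->|]; rewrite ?mem0v.
by rewrite (bigD1 i) //= eqxx big1 ?addr0 // => j /negPf ->.
Qed.

Lemma pi_0 i j v : v \in g j -> i != j -> pi i v = 0.
Proof.
move=> Hv Hij; rewrite (@pi_uniq (fun l => if l == j then v else 0) v _ _ i) ?(negPf Hij) //.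
  by move=> l; case: eqP => [->|]; rewrite ?mem0v.
by rewrite (bigD1 j) //= eqxx big1 ?addr0 // => l /negPf ->.
Qed.

Lemma cap0 a b v : v \in g a -> v \in g b -> a != b -> v = 0.
Proof. by move=> Ha Hb Hab; rewrite -(pi_id Ha) (pi_0 Hb Hab). Qed.

Lemma sum0_dir i j a b : a \in g j -> b \in g i -> j != i -> a + b = 0 -> a = 0.
Proof.
move=> Ha Hb Hji H; have := congr1 (pi j) H.
by rewrite linearD /= (pi_id Ha) (pi_0 Hb Hji) linear0 addr0.
Qed.

Lemma nbr_mixed k (x : 'I_k.+1 -> V) a b ta tb :
  x ta \in g a -> x tb \in g b -> a != b -> nbr br x = 0.
Proof.
move=> Ha Hb Hab; apply: (cap0 _ _ Hab).
  exact: (nbr_mem (@idealg a) Ha).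
exact: (nbr_mem (@idealg b) Hb).
Qed.

Lemma other k (Hk : (1 <= k)%N) (s : 'I_k.+1) : exists t, t != s.
Proof.
case: (eqVneq s ord0) => [->|H]; last by exists ord0; rewrite eq_sym.
by exists ord_max; rewrite -val_eqE /= -lt0n.
Qed.

Lemma nbr_proj k (Hk : (1 <= k)%N) (x : 'I_k.+1 -> V) s i w :
  (forall t, t != s -> x t \in g i) ->
  nbr br (upd x s w) = nbr br (upd x s (pi i w)).
Proof.
move=> Hx; have [t Hts] := other Hk s.
rewrite -{1}(pi_sum w).
rewrite (additive_sum (Phi := fun w => nbr br (upd x s w))); last first.
- exact: nbr_upd0.
- by move=> a b; exact: nbrD.
rewrite (bigD1 i) //= big1 ?addr0 // => l Hli.
apply: (@nbr_mixed _ _ l i s t); rewrite ?upd_eq ?upd_neq ?pi_mem //; exact: Hx.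
Qed.

Definition fij (P : 'End(V)) i j : 'End(V) := (pi j \o P \o pi i)%VF.

Lemma fijE P i j v : fij P i j v = pi j (P (pi i v)).
Proof. by rewrite /fij !comp_lfunE. Qed.

Lemma fij_sum P : P = \sum_i \sum_j fij P i j.
Proof.
apply/lfunP => v; rewrite sum_lfunE.
transitivity (\sum_i P (pi i v)); first by rewrite -linear_sum pi_sum.
apply: eq_bigr => i _; rewrite sum_lfunE -[LHS]pi_sum.
by apply: eq_bigr => j _; rewrite fijE.
Qed.

Lemma forward k (Hk : (1 <= k)%N) P : LDer br k P ->
  forall i j, LDer_ij br k g i j (fij P i j).
Proof.
move=> HP i j; rewrite /LDer_ij.
case: (eqVneq i j) => [<-|Hij].
  split.
  - by move=> l Hl y Hy; rewrite fijE (pi_0 Hy) 1?eq_sym // !linear0.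
  - by move=> y _; rewrite fijE pi_mem.
  move=> x Hx; rewrite fijE (pi_id (nbr_mem (@idealg i) (Hx ord0))).
  rewrite (HP x (fun _ => memvf _)) linear_sum; apply: eq_bigr => s _.
  rewrite fijE (pi_id (Hx s)) (nbr_proj Hk (i:=i)); last by move=> t _; exact: Hx.
  apply: pi_id; apply: (nbr_mem (@idealg i) (t:=s)); by rewrite upd_eq pi_mem.
split.
- by move=> l Hl y Hy; rewrite fijE (pi_0 Hy) 1?eq_sym // !linear0.
- by move=> v; rewrite fijE pi_mem.
- move=> y Hy; rewrite fijE (pi_id (nbr_mem (@idealg i) (Hy ord0))).
  rewrite (HP y (fun _ => memvf _)); apply: (pi_0 (j := i)); last by rewrite eq_sym.
  apply: memv_suml => s _; have [t Hts] := other Hk s.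
  by apply: (nbr_mem (@idealg i) (t:=t)); rewrite upd_neq.
move=> s y z Hy Hz; rewrite fijE (pi_id Hy).
have H0 : nbr br (upd z s y) = 0.
  have [t Hts] := other Hk s.
  by apply: (@nbr_mixed _ (upd z s y) i j s t); rewrite ?upd_eq ?upd_neq.
have := HP (upd z s y) (fun _ => memvf _); rewrite H0 linear0 (bigD1 s) //=.
rewrite upd_same upd_eq (nbr_proj Hk (i:=j) (x:=z)); last by move=> t _; exact: Hz.
move=> H; apply: (@sum0_dir i j _ _ _ _ _ (esym H)); last by rewrite eq_sym.
  by apply: (nbr_mem (@idealg j) (t:=s)); rewrite upd_eq pi_mem.
apply: memv_suml => t Hts; apply: (nbr_mem (@idealg i) (t:=s)).
by rewrite upd_neq 1?eq_sym // upd_eq.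
Qed.

Definition eqn (k : nat) (P : 'End(V)) (x : 'I_k.+1 -> V) :=
  P (nbr br x) = \sum_(s < k.+1) nbr br (upd x s (P (x s))).

Lemma add_sum (Phi : V -> V) (u : 'I_r -> V) :
  (forall a b, Phi (a + b) = Phi a + Phi b) -> Phi (\sum_i u i) = \sum_i Phi (u i).
Proof.
move=> HD; apply: additive_sum => //.
by apply: (addrI (Phi 0)); rewrite -HD !addr0.
Qed.

Lemma reduce (k : nat) (P : 'End(V)) :
  (forall x : 'I_k.+1 -> V, (forall t, exists l, x t \in g l) -> eqn P x) ->
  forall x : 'I_k.+1 -> V, eqn P x.
Proof.
move=> Hp.
suff H : forall m, (m <= k.+1)%N -> forall x : 'I_k.+1 -> V,
    (forall t : 'I_k.+1, (m <= t)%N -> exists l, x t \in g l) -> eqn P x.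
  by move=> x; apply: (H k.+1) => // t; rewrite leqNgt ltn_ord.
elim=> [_ x Hx|m IH Hm x Hx]; first by apply: Hp => t; exact: Hx.
pose s : 'I_k.+1 := Ordinal Hm.
have E : x = upd x s (\sum_l pi l (x s)) by rewrite pi_sum upd_id.
rewrite /eqn E.
transitivity (\sum_l P (nbr br (upd x s (pi l (x s))))).
  rewrite -linear_sum; congr (P _).
  by apply: (add_sum (Phi := fun w => nbr br (upd x s w))) => a b; exact: nbrD.
transitivity (\sum_l \sum_(t < k.+1)
   nbr br (upd (upd x s (pi l (x s))) t (P (upd x s (pi l (x s)) t)))).
  apply: eq_bigr => l _; apply: IH; first exact: ltnW.
  move=> t Ht; case: (eqVneq t s) => [->|Hts].
    by exists l; rewrite upd_eq pi_mem.
  rewrite upd_neq //; apply: Hx; rewrite ltn_neqAle Ht andbT.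
  by apply: contra Hts => /eqP Et; apply/eqP/val_inj.
symmetry; apply: (add_sum (Phi := fun w => \sum_(t < k.+1)
   nbr br (upd (upd x s w) t (P (upd x s w t))))) => a b /=.
rewrite -big_split; apply: eq_bigr => t _ /=.
case: (eqVneq t s) => [->|Hts].
  by rewrite !upd_same !upd_eq linearD nbrD.
by rewrite !upd_neq // !(upd_comm _ _ _ Hts) nbrD.
Qed.

Lemma LDer_add k (P Q : 'End(V)) : LDer br k P -> LDer br k Q -> LDer br k (P + Q).
Proof.
move=> HP HQ x Hx; rewrite add_lfunE HP // HQ // -big_split.
by apply: eq_bigr => s _; rewrite add_lfunE nbrD.
Qed.

Lemma LDer_0 k : LDer br k 0.
Proof.
move=> x _; rewrite zero_lfunE big1 // => s _.
by rewrite zero_lfunE nbr_upd0.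
Qed.

Lemma pure_case k (Hk : (1 <= k)%N) i j (f : 'End(V)) : LDer_ij br k g i j f ->
  forall x : 'I_k.+1 -> V, (forall t, exists l, x t \in g l) -> eqn f x.
Proof.
rewrite /LDer_ij => Hf x Hx.
case: (eqVneq i j) Hf => [_|Hij].
  case=> Ha Hb Hc.
  destruct (classic (forall t, x t \in g i)) as [HA|HB]; first exact: Hc.
  have [t0 Ht0] := not_all_ex_not _ _ HB; have [l0 Hl0] := Hx t0.
  have Hl0i : l0 != i by apply/eqP => E; apply: Ht0; rewrite -E.
  rewrite /eqn (Ha l0 Hl0i _ (nbr_mem (@idealg l0) Hl0)) big1 // => s _.
  have [ls Hls] := Hx s.
  case: (eqVneq ls i) => [Els|Hlsi]; last by rewrite (Ha ls Hlsi _ Hls) nbr_upd0.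
  rewrite Els in Hls.
  have Hst : t0 != s by apply/eqP => E; apply: Ht0; rewrite E.
  apply: (@nbr_mixed _ _ i l0 s t0); rewrite ?upd_eq ?upd_neq //; first exact: Hb.
  by rewrite eq_sym.
case=> Ha Hb Hc Hd.
destruct (classic (forall t, x t \in g i)) as [HA|HB].
  rewrite /eqn (Hc x HA) big1 // => s _; have [t Hts] := other Hk s.
  apply: (@nbr_mixed _ _ j i s t); rewrite ?upd_eq ?upd_neq //.
  by rewrite eq_sym.
have [t0 Ht0] := not_all_ex_not _ _ HB; have [l0 Hl0] := Hx t0.
have Hl0i : l0 != i by apply/eqP => E; apply: Ht0; rewrite -E.
rewrite /eqn (Ha l0 Hl0i _ (nbr_mem (@idealg l0) Hl0)) big1 // => s _.
have [ls Hls] := Hx s.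
case: (eqVneq ls i) => [Els|Hlsi]; last by rewrite (Ha ls Hlsi _ Hls) nbr_upd0.
rewrite Els in Hls.
destruct (classic (exists t, t != s /\ x t \notin g j)) as [[t [Hts Ht]]|HN].
  have [lt Hlt] := Hx t.
  have Hjl : j != lt by apply/eqP => E; move: Ht; rewrite E Hlt.
  by apply: (@nbr_mixed _ _ j lt s t); rewrite ?upd_eq ?upd_neq.
have Hz : forall t, upd x s 0 t \in g j.
  move=> t; case: (eqVneq t s) => [->|Hts]; first by rewrite upd_eq mem0v.
  rewrite upd_neq //; apply/negPn/negP => H; apply: HN; by exists t.
by have := Hd s (x s) (upd x s 0) Hls Hz; rewrite upd_same.
Qed.

Lemma main k (Hk : (1 <= k)%N) (P : 'End(V)) :
    LDer br k P <->
    exists f : 'I_r -> 'I_r -> 'End(V),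
      (forall i j, LDer_ij br k g i j (f i j)) /\
      P = \sum_(i < r) \sum_(j < r) f i j.
Proof.
split.
  move=> HP; exists (fij P); split; first exact: forward.
  exact: fij_sum.
case=> f [Hf ->].
apply: (big_ind (LDer br k)); [exact: LDer_0 | exact: LDer_add | move=> i _].
apply: (big_ind (LDer br k)); [exact: LDer_0 | exact: LDer_add | move=> j _].
move=> x _; apply: reduce => y Hy; exact: (pure_case Hk (Hf i j)).
Qed.

End Dec.

Theorem lemma3 (F : closedFieldType) (charF0 : [pchar F] =i pred0)
    (V : vectType F) (br : V -> V -> V) (Hlie : lie_bracket br)
    (r : nat) (g : 'I_r -> {vspace V})
    (Hideal : forall (i : 'I_r) (x y : V), y \in g i -> br x y \in g i)
    (Hdirect : directv (\sum_(i < r) g i)%VS)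
    (Hfull : (\sum_(i < r) g i)%VS = fullv)
    (k : nat) (Hk : (1 <= k)%N) :
  forall P : 'End(V),
    LDer br k P <->
    exists f : 'I_r -> 'I_r -> 'End(V),
      (forall i j, LDer_ij br k g i j (f i j)) /\
      P = \sum_(i < r) \sum_(j < r) f i j.
Proof. move=> P; exact: (main Hlie Hideal Hdirect Hfull Hk P). Qed.
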